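(* Let $\alpha\in(0,\pi/2)$ and $F(\beta)=f_1(\alpha,\beta,r_0(\alpha,\beta))$ for $\beta\in[0,\alpha]$. Then $\frac{d}{d\beta}F(\beta)=0$ for some $0\le\beta\le\alpha$ if and only if $\alpha\in[\pi/6,\pi/3]$ and $$\beta=\tfrac12\arccos\!\left(\frac{-2\cos(4\alpha)+\cos(6\alpha)+2}{3-2\cos(4\alpha)}\right).$$
   Context: $f_1(\alpha,\beta,r)=\frac{2\sin\alpha}{\cos\beta(\tan\alpha+\tan\beta)}\cdot\frac{1+\frac{2\tan\beta}{\tan\alpha+\tan\beta}r}{\sqrt{1+r^2+2\cos(2\alpha)r}}$; with $A=\frac{2\tan\beta}{\tan\alpha+\tan\beta}$ and $B=2\cos(2\alpha)$, $r_0(\alpha,\beta)=\frac{2A-B}{2-AB}$. *)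

(* Defs.v *)
From Stdlib Require Import Reals.
From Coquelicot Require Import Coquelicot.
Open Scope R_scope.

Definition f1 (a b r : R) : R :=
  (2 * sin a / (cos b * (tan a + tan b))) *
  ((1 + (2 * tan b / (tan a + tan b)) * r) /
   sqrt (1 + r ^ 2 + 2 * cos (2 * a) * r)).

Definition Acoef (a b : R) : R := 2 * tan b / (tan a + tan b).
Definition Bcoef (a : R) : R := 2 * cos (2 * a).

Definition r0 (a b : R) : R :=
  (2 * Acoef a b - Bcoef a) / (2 - Acoef a b * Bcoef a).

Definition Fab (a : R) (b : R) : R := f1 a b (r0 a b).

(* Main.v *)
Require Import Defs.
From Stdlib Require Import Reals.
From Coquelicot Require Import Coquelicot.
From Stdlib Require Import Lra Psatz.
Open Scope R_scope.

Definition Nt (t s : R) := (1+t^2)*(t+s)^2 - 4*(1-t^2)*s*(t+s) + 4*(1+t^2)*s^2.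
Definition Pp (t s : R) := Nt t s * (1 + s^2).

Lemma Nt_pos t s : 0 < t -> 0 < t + s -> 0 < Nt t s.
Proof.
  intros Ht Hs. unfold Nt.
  assert (H: (1+t^2) * ((1+t^2)*(t+s)^2 - 4*(1-t^2)*s*(t+s) + 4*(1+t^2)*s^2)
     = ((1+t^2)*(t+s) - 2*(1-t^2)*s)^2 + 16*t^2*s^2) by ring.
  assert (Ht2: 0 < 1 + t^2) by nra.
  assert (0 < ((1+t^2)*(t+s) - 2*(1-t^2)*s)^2 + 16*t^2*s^2).
  { destruct (Req_dec s 0) as [->|Hs0].
    - replace (((1 + t ^ 2) * (t + 0) - 2 * (1 - t ^ 2) * 0) ^ 2 + 16 * t ^ 2 * 0 ^ 2)
        with (((1+t^2)*t)^2) by ring. apply pow_lt. nra.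
    - assert (0 < s^2) by (apply pow2_gt_0; auto).
      assert (0 < t^2) by nra.
      assert (0 <= ((1+t^2)*(t+s) - 2*(1-t^2)*s)^2) by apply pow2_ge_0.
      nra. }
  rewrite <- H in H0. nra.
Qed.

Lemma Pp_pos t s : 0 < t -> 0 < t + s -> 0 < Pp t s.
Proof. intros. unfold Pp. apply Rmult_lt_0_compat. now apply Nt_pos. nra. Qed.

Lemma ident (t s sa ca cx c2 : R) :
  0 < t -> 0 < ca -> 0 < cx -> 0 < t + s ->
  0 < (t+s)*(1+t^2) - 2*s*(1-t^2) ->
  sa = t * ca -> c2 = (1 - t^2)/(1+t^2) ->
  ca * ca = / (1 + t^2) -> cx * cx = / (1 + s^2) ->
  let r := (2*(2*s/(t+s)) - 2*c2)/(2 - (2*s/(t+s))*(2*c2)) in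
  (2*sa/(cx*(t+s))) * ((1 + (2*s/(t+s))*r)/sqrt(1 + r^2 + 2*c2*r))
  = sqrt (Pp t s) / (t+s)^2.
Proof.
  intros Ht Hca Hcx Hts Hg Hsa Hc2 Hca2 Hcx2 r.
  assert (Ht2: 0 < 1 + t^2) by nra.
  assert (Hs2: 0 < 1 + s^2) by nra.
  assert (HAB: 2 - (2*s/(t+s))*(2*c2) = 2*((t+s)*(1+t^2) - 2*s*(1-t^2))/((t+s)*(1+t^2))).
  { rewrite Hc2. field. lra. }
  assert (HAB0: 0 < 2 - (2*s/(t+s))*(2*c2)).
  { rewrite HAB. apply Rdiv_lt_0_compat; nra. }
  set (W := Nt t s / ((1+t^2)*(t+s)^2)).
  assert (HW: 0 < W). { unfold W. apply Rdiv_lt_0_compat. now apply Nt_pos. 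
     apply Rmult_lt_0_compat; [lra| apply pow_lt; lra]. }
  set (D := 1 + r^2 + 2*c2*r).
  assert (HD: D = 16*t^2*W/((1+t^2)^2 * (2 - (2*s/(t+s))*(2*c2))^2)).
  { unfold D, r, W, Nt. rewrite HAB. rewrite Hc2. field. split; [|split]; try lra. }
  assert (HD0 : 0 < D). { rewrite HD. apply Rdiv_lt_0_compat.
    apply Rmult_lt_0_compat; [|lra]. assert (0 < t^2) by nra. lra.
    apply Rmult_lt_0_compat; apply pow_lt; lra. }
  assert (H1r : 0 < 1 + (2*s/(t+s))*r).
  { replace (1 + (2*s/(t+s))*r) with (2*W/(2 - (2*s/(t+s))*(2*c2))).
    apply Rdiv_lt_0_compat; lra.
    unfold r, W, Nt. rewrite HAB, Hc2. field. repeat split; lra. }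
  apply Rsqr_inj.
  - apply Rmult_le_pos. apply Rlt_le. apply Rdiv_lt_0_compat. subst sa. nra. nra.
    apply Rlt_le, Rdiv_lt_0_compat. lra. apply sqrt_lt_R0. lra.
  - apply Rlt_le, Rdiv_lt_0_compat. apply sqrt_lt_R0. apply Pp_pos; lra. apply pow_lt; lra.
  - assert (sqrt D <> 0). { apply Rgt_not_eq, sqrt_lt_R0. lra. }
    replace (Rsqr (2 * sa / (cx * (t + s)) * ((1 + 2 * s / (t + s) * r) / sqrt D)))
      with ((2*t)^2*(1 + 2 * s / (t + s) * r)^2 * (ca*ca) / ((cx*cx) * (t+s)^2 * (sqrt D * sqrt D))).
    2: { unfold Rsqr. subst sa. field. repeat split; lra. }
    replace (Rsqr (sqrt (Pp t s) / (t + s) ^ 2)) with ((sqrt (Pp t s) * sqrt (Pp t s)) / (t+s)^4).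
    2: { unfold Rsqr. field. lra. }
    rewrite Hca2, Hcx2, !sqrt_sqrt; try lra. 2: { apply Rlt_le, Pp_pos; lra. }
    rewrite HD. unfold W, Pp, r. rewrite HAB, Hc2. unfold Nt. field.
    pose proof (Nt_pos t s Ht Hts) as HN. unfold Nt in HN. repeat split; lra.
Qed.

Definition Ee (t s : R) := ((1+5*t^2)*s - t*(3-t^2)) * (3*t*s^2 + (t^2-1)*s + t).
Definition hK (t s : R) := sqrt (Pp t s / (t+s)^4).

Lemma hK_eq t s : 0 < t -> 0 < t + s -> sqrt (Pp t s) / (t+s)^2 = hK t s.
Proof.
  intros Ht Hs. unfold hK. rewrite sqrt_div. 2: apply Rlt_le, Pp_pos; lra.
  2: apply pow_lt; lra.
  f_equal. replace ((t+s)^4) with (((t+s)^2)^2) by ring. rewrite sqrt_pow2. auto.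
  apply pow_le; lra.
Qed.

Lemma hK_deriv t s : 0 < t -> 0 < t + s ->
  is_derive (hK t) s (Ee t s / ((t+s)^5 * hK t s)).
Proof.
  intros Ht Hs.
  assert (HP := Pp_pos t s Ht Hs).
  assert (HK : 0 < Pp t s / (t+s)^4). { apply Rdiv_lt_0_compat; auto. apply pow_lt; lra. }
  assert (Hq : 0 < hK t s). { unfold hK. apply sqrt_lt_R0. auto. }
  unfold hK in *. revert HK Hq. unfold Pp, Nt. intros HK Hq.
  auto_derive.
  - assert (H4 : 0 < (t+s)^4) by (apply pow_lt; lra).
    split. simpl in H4. lra. split; [|auto].
    match goal with |- 0 < ?e => replace e with (Pp t s / (t+s)^4) end. auto.
    unfold Pp, Nt. field. lra.
  - set (q := sqrt _). set (q' := sqrt _) in Hq.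
    assert (q = q'). { unfold q, q'. f_equal. }
    rewrite H. unfold Ee. field. split; lra.
Qed.
Lemma cos_sq_tan x : 0 < cos x -> cos x * cos x = / (1 + tan x ^ 2).
Proof.
  intros H. pose proof (sin2_cos2 x) as E. unfold Rsqr in E. unfold tan.
  assert (E2 : 1 + (sin x / cos x)^2 = (sin x*sin x + cos x*cos x)/(cos x*cos x)) by (field; lra).
  rewrite E2, E. field. lra.
Qed.

Lemma cos2_tan x : 0 < cos x -> cos (2*x) = (1 - tan x ^ 2) / (1 + tan x ^ 2).
Proof.
  intros H. rewrite cos_2a_cos.
  assert (Hc := cos_sq_tan x H).
  assert (0 < 1 + tan x ^ 2) by nra.
  replace (2 * cos x * cos x - 1) with (2 * (cos x * cos x) - 1) by ring.
  rewrite Hc. field. lra.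
Qed.

Lemma atan_acos s0 : 0 <= s0 -> / 2 * acos ((1 - s0^2)/(1 + s0^2)) = atan s0.
Proof.
  intros Hs.
  pose proof (atan_bound s0) as [B1 B2].
  assert (Hc : 0 < cos (atan s0)) by (apply cos_gt_0; lra).
  assert (Hpos : 0 <= atan s0).
  { destruct (Rle_or_lt 0 (atan s0)) as [h|h]; auto.
    pose proof (tan_lt_0 (atan s0)) as T. rewrite tan_atan in T. lra. }
  rewrite <- (tan_atan s0) at 1 2. rewrite <- cos2_tan by auto.
  rewrite acos_cos. field. pose proof PI_RGT_0. lra.
Qed.

Lemma X_eq a : 
  let t := tan a in let c := cos (2*a) in
  c = (1 - t^2)/(1+t^2) ->
  (- 2 * cos (4 * a) + cos (6 * a) + 2) / (3 - 2 * cos (4 * a))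
  = (1 - (t*(3-t^2)/(1+5*t^2))^2)/(1 + (t*(3-t^2)/(1+5*t^2))^2).
Proof.
  intros t c Hc.
  assert (H4 : cos (4*a) = 2*c*c - 1). { replace (4*a) with (2*(2*a)) by ring. apply cos_2a_cos. }
  assert (H6 : cos (6*a) = 4*c^3 - 3*c).
  { replace (6*a) with (2*(2*a) + 2*a) by ring. rewrite cos_plus, cos_2a_cos.
    replace (sin (2*(2*a))) with (2 * sin (2*a) * c) by (unfold c; symmetry; apply sin_2a).
    pose proof (sin2_cos2 (2*a)) as E. unfold Rsqr in E. fold c in E |- *.
    assert (S: sin (2*a) * sin (2*a) = 1 - c*c) by lra.
    transitivity ((2*c*c-1)*c - 2*c*(sin(2*a)*sin(2*a))). ring. rewrite S. ring. }
  rewrite H4, H6, Hc.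
  assert (0 < 1 + t^2) by nra.
  assert (0 < 1 + 5*t^2) by nra.
  field. repeat split; try lra; nra.
Qed.
Lemma final a b : 0 < a < PI/2 -> 0 <= b <= a ->
  ((1+5*tan a^2)*tan b - tan a*(3 - tan a^2) = 0 <->
   (PI / 6 <= a <= PI / 3 /\
      b = / 2 * acos ((- 2 * cos (4 * a) + cos (6 * a) + 2) / (3 - 2 * cos (4 * a))))).
Proof.
  intros Ha Hb.
  pose proof PI_RGT_0 as Hpi.
  set (t := tan a).
  assert (Ht : 0 < t) by (apply tan_gt_0; lra).
  assert (Hca : 0 < cos a) by (apply cos_gt_0; lra).
  assert (Hc : cos (2*a) = (1 - t^2)/(1+t^2)) by (apply cos2_tan; auto).
  pose proof (X_eq a Hc) as HX. fold t in HX. rewrite HX.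
  assert (H5 : 0 < 1 + 5*t^2) by nra.
  set (s0 := t*(3-t^2)/(1+5*t^2)).
  assert (S3 : 0 < sqrt 3) by (apply sqrt_lt_R0; lra).
  assert (S3' : sqrt 3 * sqrt 3 = 3) by (apply sqrt_sqrt; lra).
  assert (Hs: 0 <= tan b <= t).
  { split.
    - destruct (Req_dec b 0) as [->|h]. rewrite tan_0. lra. apply Rlt_le, tan_gt_0; lra.
    - destruct (Req_dec b a) as [->|h]. unfold t; lra. apply Rlt_le, tan_increasing; lra. }
  split.
  - intros HL.
    assert (Es : tan b = s0). { unfold s0. field_simplify_eq; lra. }
    assert (E2 : t*(3-t^2) = tan b * (1+5*t^2)) by (rewrite Es; unfold s0; field; lra).
    assert (T1 : t^2 <= 3) by nra.
    assert (T2 : 1/3 <= t^2) by nra.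
    split; [split|].
    + destruct (Rle_or_lt (PI/6) a) as [h|h]; auto.
      pose proof (tan_increasing a (PI/6)) as T. rewrite tan_PI6 in T.
      assert (t < 1 / sqrt 3) by (apply T; lra).
      assert (t * sqrt 3 < 1). { apply Rmult_lt_reg_r with (/ sqrt 3). 
        apply Rinv_0_lt_compat; lra. field_simplify; lra. }
      nra.
    + destruct (Rle_or_lt a (PI/3)) as [h|h]; auto.
      pose proof (tan_increasing (PI/3) a) as T. rewrite tan_PI3 in T.
      assert (sqrt 3 < t) by (apply T; lra).
      nra.
    + rewrite atan_acos. rewrite <- Es. rewrite atan_tan; auto. lra.
      rewrite <- Es; lra.
  - intros [[HA1 HA2] HB].
    assert (T2 : 1 / sqrt 3 <= t).
    { rewrite <- tan_PI6. destruct (Req_dec a (PI/6)) as [->|h]. unfold t; lra.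
      apply Rlt_le, tan_increasing; lra. }
    assert (T1 : t <= sqrt 3).
    { rewrite <- tan_PI3. destruct (Req_dec a (PI/3)) as [->|h]. unfold t; lra.
      apply Rlt_le, tan_increasing; lra. }
    assert (T3 : t^2 <= 3) by nra.
    assert (Hs0 : 0 <= s0). { unfold s0. apply Rmult_le_pos. nra. apply Rlt_le, Rinv_0_lt_compat; lra. }
    rewrite atan_acos in HB by auto.
    rewrite HB, tan_atan. unfold s0. field. lra.
Qed.

Lemma loc_pos (f : R -> R) y : continuous f y -> 0 < f y -> locally y (fun s => 0 < f s).
Proof.
  intros Hc Hp.
  pose proof (proj1 (filterlim_locally f (f y)) Hc (mkposreal _ Hp)) as H.
  apply filter_imp with (2 := H). intros s Hs. simpl in Hs.
  unfold ball in Hs; simpl in Hs; unfold AbsRing_ball, abs, minus, plus, opp in Hs; simpl in Hs.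
  apply Rabs_def2 in Hs. lra.
Qed.

Lemma Q_pos t s : 0 < t -> 0 <= s <= t -> 0 < 3*t*s^2 + (t^2-1)*s + t.
Proof.
  intros Ht [H1 H2]. destruct (Req_dec s 0) as [->|h]. lra.
  assert (0 < s) by lra. assert (0 < t^2*s) by (apply Rmult_lt_0_compat; nra).
  assert (0 <= 3*t*s^2) by (apply Rmult_le_pos; nra). nra.
Qed.

Theorem lemma10 (a : R) (ha : 0 < a < PI / 2) :
  forall b : R, 0 <= b <= a ->
    (is_derive (Fab a) b 0 <->
     (PI / 6 <= a <= PI / 3 /\
      b = / 2 * acos ((- 2 * cos (4 * a) + cos (6 * a) + 2) / (3 - 2 * cos (4 * a))))).
Proof.
  intros b Hb.
  pose proof PI_RGT_0 as Hpi.
  rewrite <- (final a b ha Hb).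
  set (t := tan a).
  assert (Ht : 0 < t) by (apply tan_gt_0; lra).
  assert (Hca : 0 < cos a) by (apply cos_gt_0; lra).
  assert (Hcb : 0 < cos b) by (apply cos_gt_0; lra).
  assert (Hs: 0 <= tan b <= t).
  { split.
    - destruct (Req_dec b 0) as [->|h]. rewrite tan_0. lra. apply Rlt_le, tan_gt_0; lra.
    - destruct (Req_dec b a) as [->|h]. unfold t; lra. apply Rlt_le, tan_increasing; lra. }
  assert (L1 : locally b (fun x => 0 < cos x)) by (apply loc_pos; [apply continuous_cos | auto]).
  assert (L2 : locally (tan b) (fun s => 0 < t + s /\ 0 < (t+s)*(1+t^2) - 2*s*(1-t^2))).
  { apply filter_and.
    - apply (loc_pos (fun s => t + s)).
      apply (@ex_derive_continuous R_AbsRing R_NormedModule). auto_derive. auto. lra.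
    - apply (loc_pos (fun s => (t+s)*(1+t^2) - 2*s*(1-t^2))).
      apply (@ex_derive_continuous R_AbsRing R_NormedModule). auto_derive. auto. assert (0 <= t^2*tan b) by (apply Rmult_le_pos; nra). assert (0 < t^3) by (apply pow_lt; lra). nra. }
  assert (L2' : locally b (fun x => 0 < t + tan x /\ 0 < (t+tan x)*(1+t^2) - 2*tan x*(1-t^2))).
  { exact (continuous_tan b (Rgt_not_eq _ _ Hcb) _ L2). }
  assert (Eq : locally b (fun x => Fab a x = hK t (tan x))).
  { apply filter_imp with (2 := filter_and _ _ L1 L2').
    intros x [c1 [c2 c3]].
    unfold Fab, f1, r0, Acoef, Bcoef. fold t.
    rewrite <- hK_eq by lra.
    apply (ident t (tan x) (sin a) (cos a) (cos x) (cos (2*a))); auto.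
    - unfold t, tan. field. lra.
    - apply cos2_tan; auto.
    - apply cos_sq_tan; auto.
    - apply cos_sq_tan; auto. }
  assert (HD : is_derive (fun x => hK t (tan x)) b
                 ((tan b^2+1) * (Ee t (tan b) / ((t + tan b)^5 * hK t (tan b))))).
  { apply (is_derive_comp (hK t) tan b). apply hK_deriv; lra.
    apply is_derive_tan. lra. }
  assert (Hq : 0 < hK t (tan b)). { unfold hK. apply sqrt_lt_R0. apply Rdiv_lt_0_compat.
    apply Pp_pos; lra. apply pow_lt; lra. }
  assert (H5 : 0 < (t + tan b)^5) by (apply pow_lt; lra).
  assert (HQ := Q_pos t (tan b) Ht Hs).
  split.
  - intros Hd0.
    assert (Hd1 : is_derive (fun x => hK t (tan x)) b 0) by (eapply is_derive_ext_loc; eauto).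
    apply is_derive_unique in Hd1. apply is_derive_unique in HD. rewrite HD in Hd1.
    assert (Ee t (tan b) = 0).
    { apply Rmult_integral in Hd1. destruct Hd1 as [h|h]. nra.
      unfold Rdiv in h. apply Rmult_integral in h. destruct h as [h|h]. auto.
      exfalso. revert h. apply Rinv_neq_0_compat. nra. }
    unfold Ee in H. apply Rmult_integral in H. destruct H as [h|h]. exact h. lra.
  - intros HL.
    assert (HE : Ee t (tan b) = 0) by (unfold Ee; rewrite HL; ring).
    rewrite HE in HD.
    replace ((tan b ^ 2 + 1) * (0 / ((t + tan b) ^ 5 * hK t (tan b)))) with 0 in HD
      by (field; split; lra).
    eapply is_derive_ext_loc; [|exact HD].
    apply filter_imp with (2 := Eq). intros x h; auto.
Qed.
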